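(* Let $f_0,g_0\in\mathbb{C}[z]$ be polynomials of length $\ell$ with nonzero constant coefficients, let $t$ be an element of the group $G_{\ell,\ell}=\langle s,n,h,r\rangle$ of permutations of $P_\ell\times P_\ell$, and let $(a_0,b_0)=t(f_0,g_0)$. Let $\sigma_0,\sigma_1,\ldots$ be a sequence in $\{-1,1\}$, and for $q\in\{f,g,a,b\}$ define $q_{m+1}(z)=q_m(z)+\sigma_m z^{\operatorname{len} q_m}q_m^\dagger(-z)$ for all $m\ge0$. Then \[ \lim_{m\to\infty}\mathrm{CDF}(a_m,b_m)=\lim_{m\to\infty}\mathrm{CDF}(f_m,g_m)\quad\text{and}\quad\lim_{m\to\infty}\mathrm{PSC}(a_m,b_m)=\lim_{m\to\infty}\mathrm{PSC}(f_m,g_m). \]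
   Context: For a polynomial $a(z)=a_0+\cdots+a_dz^d$ of degree $d$, $\operatorname{len}a=1+d$ and $a^\dagger(z)=\overline{a_d}+\overline{a_{d-1}}z+\cdots+\overline{a_0}z^d$; $q^\dagger(-z)$ means $q^\dagger$ evaluated at $-z$; $\widetilde{a}(z)=a(-z)$. $P_\ell$ is the set of polynomials of length $\ell$ in $\mathbb{C}[z]$ with nonzero constant coefficient, and $G_{\ell,\ell}$ is the group of permutations of $P_\ell\times P_\ell$ generated by $s(f,g)=(g,f)$, $n(f,g)=(-f,g)$, $h(f,g)=(\widetilde{f},\widetilde{g})$, $r(f,g)=(f^\dagger,g^\dagger)$. Polynomials are identified with coefficient sequences. For sequences $f,g$ of equal length, $C_{f,g}(s)=\sum_jf_{j+s}\overline{g_j}$; $\mathrm{CDF}(f,g)=\sum_s|C_{f,g}(s)|^2/(|C_{f,f}(0)||C_{g,g}(0)|)$ (equal to $\|fg\|_2^2/(\|f\|_2^2\|g\|_2^2)$ with $\|a\|_2^2=\frac{1}{2\pi}\int_0^{2\pi}|a(e^{i\theta})|^2d\theta$); $\mathrm{ADF}(f)=\mathrm{CDF}(f,f)-1$; and $\mathrm{PSC}(f,g)=\sqrt{\mathrm{ADF}(f)\mathrm{ADF}(g)}+\mathrm{CDF}(f,g)$. *)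

(* Defs.v *)
From HB Require Import structures.
From mathcomp Require Import all_boot all_order all_algebra.
From mathcomp Require Import all_classical all_reals all_analysis.
From mathcomp Require Import complex.

Set Implicit Arguments.
Unset Strict Implicit.
Unset Printing Implicit Defensive.

Import Order.TTheory GRing.Theory Num.Theory numFieldNormedType.Exports.
Local Open Scope ring_scope.

Section Defs.
Variable R : realType.
Local Notation C := (R[i]).

Definition cconj (x : C) : C := conjc x.
Definition sqmod (x : C) : R := (complex.Re x) ^+ 2 + (complex.Im x) ^+ 2.
Definition modc (x : C) : R := Num.sqrt (sqmod x).

Definition coefz (p : {poly C}) (k : int) : C :=
  match k with Posz n => p`_n | Negz _ => 0 end.

Definition corr (f g : {poly C}) (s : int) : C :=
  \sum_(j < size g) coefz f (s + (j : nat)%:Z) * cconj g`_j.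

(* CDF(f,g) = sum_s |C_{f,g}(s)|^2 / (|C_{f,f}(0)| |C_{g,g}(0)|);
   the sum runs over all shifts s with |s| < max(len f, len g), outside of
   which C_{f,g}(s) = 0. *)
Definition CDF (f g : {poly C}) : R :=
  let N := maxn (size f) (size g) in
  (\sum_(0 <= k < (N.*2).-1) sqmod (corr f g (k%:Z - (N.-1)%:Z)))
    / (modc (corr f f 0) * modc (corr g g 0)).

Definition ADF (f : {poly C}) : R := CDF f f - 1.

Definition PSC (f g : {poly C}) : R := Num.sqrt (ADF f * ADF g) + CDF f g.

Definition dagger (p : {poly C}) : {poly C} :=
  \poly_(i < size p) cconj p`_((size p).-1 - i).

Definition negz (p : {poly C}) : {poly C} := p \Po (- 'X).

Definition step (sg : C) (q : {poly C}) : {poly C} :=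
  q + sg *: ('X^(size q) * negz (dagger q)).

Fixpoint qseq (sigma : nat -> C) (q0 : {poly C}) (m : nat) : {poly C} :=
  match m with
  | 0 => q0
  | m'.+1 => step (sigma m') (qseq sigma q0 m')
  end.

End Defs.

Inductive gen := Gs | Gn | Gh | Gr.

Definition act_gen (R : realType) (x : gen) (p : {poly R[i]} * {poly R[i]}) :
  {poly R[i]} * {poly R[i]} :=
  let: (f, g) := p in
  match x with
  | Gs => (g, f)
  | Gn => (- f, g)
  | Gh => (negz f, negz g)
  | Gr => (dagger f, dagger g)
  end.

(* the group element represented by a word in the generators (composition);
   every element of G_{l,l} = <s,n,h,r> is of this form, since the
   generators are involutions on P_l x P_l. *)
Definition act_word (R : realType) (w : seq gen) (p : {poly R[i]} * {poly R[i]}) :=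
  foldr (@act_gen R) p w.

(* Main.v *)
Require Import Defs.
From HB Require Import structures.
From mathcomp Require Import all_boot all_order all_algebra.
From mathcomp Require Import all_classical all_reals all_analysis.
From mathcomp Require Import complex.
From mathcomp Require Import ring lra zify.
Import Order.TTheory GRing.Theory Num.Theory numFieldNormedType.Exports.
Set Implicit Arguments.
Unset Strict Implicit.
Unset Printing Implicit Defensive.
Local Open Scope ring_scope.

Section Circ.
Variable R : realType.
Local Notation C := (R[i]).

Definition om (K : nat) : C := iter K (@sqrtc R) (-1).
Definition MM (K : nat) : nat := (2 ^ K.+1)%N.

Lemma omS K : om K.+1 = sqrtc (om K). Proof. by []. Qed.

Lemma om_half K : om K ^+ (2 ^ K) = -1.
Proof.
elim: K => [|K IH]; first by rewrite expn0 expr1.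
by rewrite omS expnS exprM sqr_sqrtc.
Qed.

Lemma om_M K : om K ^+ MM K = 1.
Proof. by rewrite /MM expnS mulnC exprM om_half sqrrN expr1n. Qed.

Lemma unit_sq1 (y : C) : 0 <= y -> y ^+ 2 = 1 -> y = 1.
Proof.
move=> y0 /eqP; rewrite sqrf_eq1 => /orP[/eqP //|/eqP yN].
by move: y0; rewrite yN oppr_ge0 ler10.
Qed.

Lemma om_unit K : om K * (om K)^* = 1.
Proof.
elim: K => [|K IH]; first by rewrite /om /= rmorphN1 mulrNN mulr1.
rewrite omS; apply: unit_sq1; first exact: mul_conjC_ge0.
by rewrite exprMn -rmorphXn sqr_sqrtc.
Qed.

Lemma om_prim K : (MM K).-primitive_root (om K).
Proof.
have M0 : (0 < MM K)%N by rewrite /MM expn_gt0.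
have [m pm dm] := prim_order_exists M0 (om_M K).
case/dvdn_pfactor: dm => // j jle em; subst m.
have [jlt|jge] := ltnP j K.+1; last first.
  have ej : j = K.+1 by apply/eqP; rewrite eqn_leq jle jge.
  by rewrite ej in pm.
have d : (2 ^ j %| 2 ^ K)%N by apply: dvdn_exp2l; rewrite -ltnS.
move: d; rewrite (prim_order_dvd pm) om_half => /eqP e.
have : (1 + 1 : C) = 0 by rewrite -{1}e addNr.
by move/eqP; rewrite -[1 + 1]/(2%:R) pnatr_eq0.
Qed.


Definition Sm K (h : C -> C) : C := \sum_(k < MM K) h (om K ^+ k).

Lemma omk_unit K k : om K ^+ k * (om K ^+ k)^* = 1.
Proof. by rewrite rmorphXn -exprMn om_unit expr1n. Qed.

Lemma Sm_ext K h1 h2 : (forall x, x * x^* = 1 -> h1 x = h2 x) -> Sm K h1 = Sm K h2.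
Proof. by move=> e; apply: eq_bigr => k _; rewrite e // omk_unit. Qed.

Lemma Sm_add K h1 h2 : Sm K (fun x => h1 x + h2 x) = Sm K h1 + Sm K h2.
Proof. by rewrite /Sm big_split. Qed.

Lemma Sm_sub K h1 h2 : Sm K (fun x => h1 x - h2 x) = Sm K h1 - Sm K h2.
Proof. by rewrite /Sm sumrB. Qed.

Lemma Sm_scal K c h : Sm K (fun x => c * h x) = c * Sm K h.
Proof. by rewrite /Sm mulr_sumr. Qed.

Lemma Sm_conj K h : Sm K (fun x => (h x)^*) = (Sm K h)^*.
Proof. by rewrite /Sm rmorph_sum. Qed.

Lemma MM_split K : MM K = (2 ^ K + 2 ^ K)%N.
Proof. by rewrite /MM expnS mul2n addnn. Qed.

Lemma sum_shift (F : nat -> C) H :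
  (forall k, F (k + (H + H))%N = F k) ->
  \sum_(k < H + H) F (k + H)%N = \sum_(k < H + H) F k.
Proof.
move=> per.
rewrite -(big_mkord xpredT (fun k => F (k + H)%N)) -(big_mkord xpredT F).
rewrite (big_cat_nat _ (leq_addr H H)) //= [RHS](big_cat_nat _ (leq_addr H H)) //= [RHS]addrC.
have sh (G : nat -> C) : \sum_(H <= i < H + H) G i = \sum_(0 <= i < H) G (i + H)%N.
  by rewrite -{1}[H]add0n big_addn addnK.
rewrite !sh; congr (_ + _).
by apply: eq_bigr => k _; rewrite -addnA per.
Qed.

Lemma Sm_negx K h : Sm K h = Sm K (fun x => h (- x)).
Proof.
rewrite /Sm.
have omH k : - om K ^+ k = om K ^+ (k + 2 ^ K) by rewrite exprD om_half mulrN1.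
under [RHS]eq_bigr => k _ do rewrite omH.
have := @sum_shift (fun k => h (om K ^+ k)) (2 ^ K)%N.
rewrite -MM_split => ->; first by [].
by move=> k; rewrite exprD om_M mulr1.
Qed.

Lemma Sm_odd K h : (forall x, x * x^* = 1 -> h (- x) = - h x) -> Sm K h = 0.
Proof.
move=> hodd.
have e : Sm K h = - Sm K h.
  rewrite {1}Sm_negx (@Sm_ext K _ (fun x => - h x)) //.
  by rewrite /Sm sumrN.
have : Sm K h *+ 2 = 0 by rewrite mulr2n {1}e addNr.
by move/eqP; rewrite mulrn_eq0 /= => /eqP.
Qed.

Lemma geo_sum K (x : C) : x ^+ MM K = 1 -> x != 1 -> \sum_(k < MM K) x ^+ k = 0.
Proof.
move=> xM x1; have := subrX1 x (MM K); rewrite xM subrr => /esym/eqP.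
by rewrite mulf_eq0 subr_eq0 (negbTE x1) /= => /eqP.
Qed.

Lemma orth K (i j : 'I_(MM K)) :
  \sum_(k < MM K) (om K ^+ i * (om K ^+ j)^*) ^+ k = (i == j)%:R * (MM K)%:R.
Proof.
case: eqP => [->|ne].
  by rewrite omk_unit mul1r; under eq_bigr do rewrite expr1n; rewrite sumr_const card_ord.
rewrite mul0r; apply: geo_sum.
  by rewrite exprMn -rmorphXn -!exprM !(mulnC _ (MM K)) !exprM om_M !expr1n rmorph1 mulr1.
apply/eqP => e; apply: ne; apply/val_inj => /=.
have : om K ^+ i = om K ^+ j.
  by rewrite -[RHS]mul1r -e -mulrA [_^* * _]mulrC omk_unit mulr1.
move/eqP; rewrite (eq_prim_root_expr (om_prim K)) => /eqP.
by rewrite !modn_small.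
Qed.

Lemma sum_trunc (F : nat -> C) s n1 n2 : (forall i, (s <= i)%N -> F i = 0) ->
  (s <= n1)%N -> (s <= n2)%N -> \sum_(i < n1) F i = \sum_(i < n2) F i.
Proof.
move=> F0.
suff h n : (s <= n)%N -> \sum_(i < n) F i = \sum_(i < s) F i.
  by move=> h1 h2; rewrite h // h.
move=> sn; rewrite (big_ord_widen n F sn) [RHS]big_mkcond; apply: eq_bigr => i _.
by case: ltnP => // si; rewrite F0.
Qed.

Definition ip (p q : {poly C}) : C := \sum_(i < size p + size q) p`_i * (q`_i)^*.

Lemma ipW (p q : {poly C}) n : (size p <= n)%N -> \sum_(i < n) p`_i * (q`_i)^* = ip p q.
Proof.
move=> h; apply: (@sum_trunc (fun i => p`_i * (q`_i)^*) (size p)) => //; last exact: leq_addr.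
by move=> i si; rewrite nth_default // mul0r.
Qed.

Lemma powswap (w : C) k i j : (w ^+ k) ^+ i * ((w ^+ k) ^+ j)^* = (w ^+ i * (w ^+ j)^*) ^+ k.
Proof. by rewrite exprMn !rmorphXn -!exprM mulnC [(j * k)%N]mulnC. Qed.

Lemma parseval K (p q : {poly C}) : (size p <= MM K)%N -> (size q <= MM K)%N ->
  Sm K (fun x => p.[x] * (q.[x])^*) = (MM K)%:R * ip p q.
Proof.
move=> sp sq; rewrite -(@ipW p q _ sp) mulr_sumr /Sm.
under eq_bigr => k _ do rewrite (horner_coef_wide _ sp) (horner_coef_wide _ sq) rmorph_sum mulr_suml.
rewrite exchange_big /=; apply: eq_bigr => i _.
under eq_bigr => k _ do rewrite mulr_sumr.
rewrite exchange_big /=.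
under eq_bigr => j _ do under eq_bigr => k _ do
  rewrite rmorphM mulrACA powswap.
under eq_bigr => j _ do rewrite -mulr_sumr orth.
rewrite (bigD1 i) //= eqxx mul1r big1 ?addr0; first by rewrite mulrC.
by move=> j /negbTE; rewrite eq_sym => ->; rewrite mul0r mulr0.
Qed.


Lemma cconjE (x : C) : cconj x = x^*. Proof. by []. Qed.

Lemma ev_negz (p : {poly C}) x : (negz p).[x] = p.[- x].
Proof. by rewrite /negz horner_comp hornerN hornerX. Qed.

Lemma ev_dagger (p : {poly C}) x : x * x^* = 1 ->
  (dagger p).[x] = x ^+ (size p).-1 * (p.[x])^*.
Proof.
move=> xu; rewrite /dagger horner_poly (horner_coef p x) rmorph_sum mulr_sumr.
rewrite (reindex_inj rev_ord_inj) /=; apply: eq_bigr => j _.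
set n := size p.
have jn : (j < n)%N := ltn_ord j.
have n0 : (0 < n)%N by apply: leq_ltn_trans jn.
have hjn : (j <= n.-1)%N by rewrite -ltnS prednK.
have e1 : (n - j.+1 = n.-1 - j)%N by lia.
have e2 : (n.-1 - (n.-1 - j) = j)%N by lia.
rewrite e1 e2 cconjE rmorphM rmorphXn.
have -> : x ^+ n.-1 = x ^+ (n.-1 - j) * x ^+ j by rewrite -exprD subnK.
rewrite mulrC -!mulrA; congr (_ * _).
by rewrite mulrCA -exprMn xu expr1n mulr1.
Qed.

Definition W (s : C) (n : nat) (x : C) : C := s * x ^+ n * (- x) ^+ n.-1.

Lemma ev_step s (q : {poly C}) x : x * x^* = 1 ->
  (step s q).[x] = q.[x] + W s (size q) x * (q.[- x])^*.
Proof.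
move=> xu; rewrite /step hornerD hornerZ hornerM hornerXn ev_negz ev_dagger; last first.
  by rewrite rmorphN mulrNN.
by rewrite /W !mulrA.
Qed.

Lemma W_neg s n x : (0 < n)%N -> W s n (- x) = - W s n x.
Proof.
case: n => // n _; rewrite /W /= opprK.
rewrite (_ : - x = -1 * x); last by rewrite mulN1r.
by rewrite !exprMn exprS; ring.
Qed.

Lemma W_unit s n x : s * s^* = 1 -> x * x^* = 1 -> W s n x * (W s n x)^* = 1.
Proof.
move=> su xu.
have nu : (- x) * (- x)^* = 1 by rewrite rmorphN mulrNN.
have -> : W s n x * (W s n x)^* = (s * s^*) * (x * x^*) ^+ n * ((- x) * (- x)^*) ^+ n.-1.
  by rewrite /W !rmorphM !rmorphXn !exprMn; ring.
by rewrite su xu nu !expr1n !mul1r.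
Qed.

Lemma W_sq s n x : s ^+ 2 = 1 -> (0 < n)%N -> W s n x ^+ 2 = x ^+ ((n + n.-1) * 2).
Proof.
move=> s2; case: n => // n _ /=.
rewrite /W !exprMn s2 mul1r [((- x) ^+ n) ^+ 2]exprAC sqrrN -!exprM -exprD.
by congr (_ ^+ _); lia.
Qed.


Section Ident.
Variables (a ab a2 a2b b bb b2 b2b w wb : C).
Hypothesis hw : w * wb = 1.

Let wbE : wb = w^-1.
Proof.
have w0 : w != 0 by apply/eqP => w0; move: hw; rewrite w0 mul0r => /eqP; rewrite eq_sym oner_eq0.
by apply: (mulfI w0); rewrite hw mulfV.
Qed.
Let w0 : w != 0.
Proof. by apply/eqP => w0; move: hw; rewrite w0 mul0r => /eqP; rewrite eq_sym oner_eq0. Qed.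

Definition T1 := a * ab * (b * bb).
Definition T2 := a2 * a2b * (b2 * b2b).
Definition T3 := a * ab * (b2 * b2b).
Definition T4 := a2 * a2b * (b * bb).
Definition T6 := wb ^+ 2 * (a * a2 * (b * b2)) + w ^+ 2 * (ab * a2b * (bb * b2b)).
Definition T7 := a * a2 * (bb * b2b) + ab * a2b * (b * b2).
Definition OI := (a * ab + a2 * a2b) * (wb * (b * b2) + w * (bb * b2b))
  + (wb * (a * a2) + w * (ab * a2b)) * (b * bb + b2 * b2b).
Definition OJ := (wb * (a * a2) + w * (ab * a2b)) * (b * bb + b2 * b2b)
  - (a * ab + a2 * a2b) * (wb * (b * b2) + w * (bb * b2b)).
Definition OA := wb * (a * a2) + w * (ab * a2b).

Lemma gA : (a + w * a2b) * (ab + wb * a2) = a * ab + a2 * a2b + OA.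
Proof. rewrite /OA wbE; field; exact: w0. Qed.

Lemma gI : (a + w * a2b) * (ab + wb * a2) * ((b + w * b2b) * (bb + wb * b2))
  = T1 + T2 + T3 + T4 + OI + T6 + T7.
Proof. rewrite /T1 /T2 /T3 /T4 /OI /T6 /T7 wbE; field; exact: w0. Qed.

Lemma gJ : (a + w * a2b) * (ab + wb * a2) * ((b2 - w * bb) * (b2b - wb * b))
  = T1 + T2 + T3 + T4 + OJ - T6 - T7.
Proof. rewrite /T1 /T2 /T3 /T4 /OJ /T6 /T7 wbE; field; exact: w0. Qed.

Lemma gK : (a + w * a2b) * (a2 - w * ab) * ((bb + wb * b2) * (b2b - wb * b))
  + (ab + wb * a2) * (a2b - wb * a) * ((b + w * b2b) * (b2 - w * bb))
  = 2 * T7 + 2 * (T1 + T2 - T3 - T4) - 2 * T6.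
Proof. rewrite /T1 /T2 /T3 /T4 /T6 /T7 wbE; field; exact: w0. Qed.

End Ident.


Definition AA (p : {poly C}) := ip p p.
Definition II (p q : {poly C}) := ip (p * q) (p * q).
Definition JJ (p q : {poly C}) := ip (p * negz q) (p * negz q).
Definition KK (p q : {poly C}) :=
  ip (p * negz p) (q * negz q) + ip (q * negz q) (p * negz p).

Lemma size_negz (p : {poly C}) : size (negz p) = size p.
Proof. by rewrite /negz size_comp_poly2 // size_polyN size_polyX. Qed.

Lemma size_mul_le2 (p q : {poly C}) : (size (p * q)%R <= size p + size q)%N.
Proof. exact: leq_trans (size_polyMleq _ _) (leq_pred _). Qed.

Lemma size_dagger_le (p : {poly C}) : (size (dagger p) <= size p)%N.
Proof. exact: size_poly. Qed.

Lemma size_step_le s (q : {poly C}) : (size (step s q) <= size q + size q)%N.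
Proof.
rewrite /step; apply: leq_trans (size_polyD _ _) _; rewrite geq_max leq_addr /=.
apply: leq_trans (size_scale_leq _ _) _; apply: leq_trans (size_polyMleq _ _) _.
rewrite size_polyXn size_negz /=; rewrite leq_add2l; exact: size_dagger_le.
Qed.

Lemma sA K (p : {poly C}) : (size p <= MM K)%N ->
  Sm K (fun x => p.[x] * (p.[x])^*) = (MM K)%:R * AA p.
Proof. by move=> h; rewrite parseval. Qed.

Lemma sI K (p q : {poly C}) : (size (p * q)%R <= MM K)%N ->
  Sm K (fun x => p.[x] * (p.[x])^* * (q.[x] * (q.[x])^*)) = (MM K)%:R * II p q.
Proof.
move=> h; rewrite -parseval //; apply: Sm_ext => x _.
by rewrite hornerM rmorphM; ring.
Qed.

Lemma sJ K (p q : {poly C}) : (size (p * negz q)%R <= MM K)%N ->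
  Sm K (fun x => p.[x] * (p.[x])^* * (q.[- x] * (q.[- x])^*)) = (MM K)%:R * JJ p q.
Proof.
move=> h; rewrite -parseval //; apply: Sm_ext => x _.
by rewrite hornerM rmorphM ev_negz; ring.
Qed.

Lemma sK K (p q : {poly C}) : (size (p * negz p)%R <= MM K)%N -> (size (q * negz q)%R <= MM K)%N ->
  Sm K (fun x => p.[x] * p.[- x] * ((q.[x])^* * (q.[- x])^*)
                 + (p.[x])^* * (p.[- x])^* * (q.[x] * q.[- x])) = (MM K)%:R * KK p q.
Proof.
move=> h1 h2; rewrite /KK mulrDr -(@parseval K _ _ h1 h2) -(@parseval K _ _ h2 h1) -Sm_add; apply: Sm_ext => x _.
by rewrite !hornerM !rmorphM !ev_negz; ring.
Qed.

Lemma sT2 K (p q : {poly C}) :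
  Sm K (fun x => p.[- x] * (p.[- x])^* * (q.[- x] * (q.[- x])^*)) =
  Sm K (fun x => p.[x] * (p.[x])^* * (q.[x] * (q.[x])^*)).
Proof. by rewrite [LHS]Sm_negx; apply: Sm_ext => x _; rewrite opprK. Qed.

Lemma sT4 K (p q : {poly C}) :
  Sm K (fun x => p.[- x] * (p.[- x])^* * (q.[x] * (q.[x])^*)) =
  Sm K (fun x => p.[x] * (p.[x])^* * (q.[- x] * (q.[- x])^*)).
Proof. by rewrite [LHS]Sm_negx; apply: Sm_ext => x _; rewrite opprK. Qed.

Lemma MM_neq0 K : (MM K)%:R != 0 :> C.
Proof. by rewrite pnatr_eq0 -lt0n /MM expn_gt0. Qed.

Lemma MM_big n : (8 * n <= MM n.+3)%N.
Proof.
have h := ltn_expl n (isT : (1 < 2)%N).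
have e : MM n.+3 = (16 * 2 ^ n)%N by rewrite /MM !expnS !mulnA.
rewrite e; lia.
Qed.


Lemma cjM (x y : C) : (x * y)^* = x^* * y^*. Proof. exact: rmorphM. Qed.
Lemma cjD (x y : C) : (x + y)^* = x^* + y^*. Proof. exact: rmorphD. Qed.
Lemma cjB (x y : C) : (x - y)^* = x^* - y^*. Proof. exact: rmorphB. Qed.
Lemma cjN (x : C) : (- x)^* = - x^*. Proof. exact: rmorphN. Qed.
Lemma cjX (x : C) k : (x ^+ k)^* = x^* ^+ k. Proof. exact: rmorphXn. Qed.
Lemma cjK (x : C) : x^*^* = x. Proof. exact: conjCK. Qed.

Lemma ev_step_n s (q : {poly C}) n x : size q = n -> x * x^* = 1 ->
  (step s q).[x] = q.[x] + W s n x * (q.[- x])^*.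
Proof. by move=> <- xu; rewrite ev_step. Qed.

Lemma ev_step_neg s (q : {poly C}) n x : (0 < n)%N -> size q = n -> x * x^* = 1 ->
  (step s q).[- x] = q.[- x] - W s n x * (q.[x])^*.
Proof.
move=> n0 eq xu; rewrite ev_step ?rmorphN ?mulrNN // opprK eq W_neg //.
by rewrite mulNr.
Qed.

Lemma ip_Xn0 (p : {poly C}) e : (size p <= e)%N -> ip p 'X^e = 0.
Proof.
move=> h; apply: big1 => i _; rewrite coefXn; case: eqP => [->|_].
  by rewrite nth_default // mul0r.
by rewrite rmorph0 mulr0.
Qed.

Section Rec.
Variables (s : C) (f g : {poly C}) (n : nat).
Hypotheses (sf : size f = n) (sg : size g = n) (n0 : (0 < n)%N)
  (su : s * s^* = 1) (s2 : s ^+ 2 = 1).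

Local Notation K := n.+3.
Local Notation M := (MM n.+3).
Local Notation a x := (f.[x]).
Local Notation a2 x := (f.[- x]).
Local Notation b x := (g.[x]).
Local Notation b2 x := (g.[- x]).
Local Notation w x := (W s n x).

Lemma bnd (p q : {poly C}) : (size p <= n + n)%N -> (size q <= n + n)%N ->
  (size (p * q)%R <= M)%N.
Proof.
move=> hp hq; have := MM_big n; have := size_mul_le2 p q; lia.
Qed.

Lemma szf : (size f <= n + n)%N. Proof. rewrite sf; exact: leq_addr. Qed.
Lemma szg : (size g <= n + n)%N. Proof. rewrite sg; exact: leq_addr. Qed.
Lemma sznf : (size (negz f) <= n + n)%N. Proof. rewrite size_negz; exact: szf. Qed.
Lemma szng : (size (negz g) <= n + n)%N. Proof. rewrite size_negz; exact: szg. Qed.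
Lemma szf1 : (size (step s f) <= n + n)%N. Proof. by rewrite -sf size_step_le. Qed.
Lemma szg1 : (size (step s g) <= n + n)%N. Proof. by rewrite -sg size_step_le. Qed.
Lemma sznf1 : (size (negz (step s f)) <= n + n)%N. Proof. rewrite size_negz; exact: szf1. Qed.
Lemma szng1 : (size (negz (step s g)) <= n + n)%N. Proof. rewrite size_negz; exact: szg1. Qed.

Lemma sT6 : Sm K (fun x => T6 (a x) (a x)^* (a2 x) (a2 x)^* (b x) (b x)^* (b2 x) (b2 x)^*
                              (w x) (w x)^*) = 0.
Proof.
set e := ((n + n.-1) * 2)%N.
have sz : (size (f * negz f * (g * negz g))%R <= e)%N.
  apply: leq_trans (size_polyMleq _ _) _.
  have h1 := size_polyMleq f (negz f); have h2 := size_polyMleq g (negz g).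
  rewrite size_negz sf in h1; rewrite size_negz sg in h2.
  rewrite /e; lia.
have sX : (size ('X^e : {poly C}) <= M)%N.
  rewrite size_polyXn; have := MM_big n; rewrite /e; lia.
have sP : (size (f * negz f * (g * negz g))%R <= M)%N.
  have := MM_big n; rewrite /e in sz; lia.
have h : Sm K (fun x => (w x)^* ^+ 2 * (a x * a2 x * (b x * b2 x))) = 0.
  rewrite (@Sm_ext K _ (fun x => (f * negz f * (g * negz g)).[x] * (('X^e).[x])^*)).
    by rewrite parseval // ip_Xn0 // mulr0.
  by move=> x _; rewrite hornerXn -rmorphXn W_sq // !hornerM !ev_negz mulrC.
rewrite /T6 Sm_add h add0r.
rewrite (@Sm_ext K _ (fun x => ((w x)^* ^+ 2 * (a x * a2 x * (b x * b2 x)))^*)).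
  by rewrite Sm_conj h rmorph0.
by move=> x _; rewrite cjM cjX cjK !cjM.
Qed.

Lemma bndM (p : {poly C}) : (size p <= n + n)%N -> (size p <= M)%N.
Proof. move=> h; have := MM_big n; lia. Qed.

Lemma negA : Sm K (fun x => a2 x * (a2 x)^*) = Sm K (fun x => a x * (a x)^*).
Proof. by rewrite [LHS]Sm_negx; apply: Sm_ext => x _; rewrite opprK. Qed.

Lemma recA : AA (step s f) = 2 * AA f.
Proof.
apply: (mulfI (MM_neq0 K)).
rewrite -(@sA K (step s f)); last exact: bndM szf1.
rewrite (@Sm_ext K _ (fun x => a x * (a x)^* + a2 x * (a2 x)^*
            + OA (a x) (a x)^* (a2 x) (a2 x)^* (w x) (w x)^*)); last first.
  move=> x xu; rewrite (@ev_step_n s f n x sf xu) cjD cjM cjK.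
  by apply: gA; exact: W_unit.
rewrite Sm_add Sm_add negA (@sA K f); last exact: bndM szf.
rewrite (@Sm_odd K); first by rewrite addr0; ring.
by move=> x xu; rewrite opprK W_neg // cjN /OA; ring.
Qed.

Lemma bsI : (size (f * g)%R <= M)%N. Proof. exact: bnd szf szg. Qed.
Lemma bsJ : (size (f * negz g)%R <= M)%N. Proof. exact: bnd szf szng. Qed.
Lemma bsKf : (size (f * negz f)%R <= M)%N. Proof. exact: bnd szf sznf. Qed.
Lemma bsKg : (size (g * negz g)%R <= M)%N. Proof. exact: bnd szg szng. Qed.

Lemma sOI : Sm K (fun x => OI (a x) (a x)^* (a2 x) (a2 x)^* (b x) (b x)^* (b2 x) (b2 x)^*
                              (w x) (w x)^*) = 0.
Proof. by apply: Sm_odd => x xu; rewrite opprK W_neg // cjN /OI; ring. Qed.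

Lemma sOJ : Sm K (fun x => OJ (a x) (a x)^* (a2 x) (a2 x)^* (b x) (b x)^* (b2 x) (b2 x)^*
                              (w x) (w x)^*) = 0.
Proof. by apply: Sm_odd => x xu; rewrite opprK W_neg // cjN /OJ; ring. Qed.

Lemma recI : II (step s f) (step s g) = 2 * II f g + 2 * JJ f g + KK f g.
Proof.
apply: (mulfI (MM_neq0 K)).
rewrite -(@sI K (step s f) (step s g)); last exact: bnd szf1 szg1.
rewrite (@Sm_ext K _ (fun x =>
    T1 (a x) (a x)^* (b x) (b x)^* + T2 (a2 x) (a2 x)^* (b2 x) (b2 x)^*
  + T3 (a x) (a x)^* (b2 x) (b2 x)^* + T4 (a2 x) (a2 x)^* (b x) (b x)^*
  + OI (a x) (a x)^* (a2 x) (a2 x)^* (b x) (b x)^* (b2 x) (b2 x)^* (w x) (w x)^*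
  + T6 (a x) (a x)^* (a2 x) (a2 x)^* (b x) (b x)^* (b2 x) (b2 x)^* (w x) (w x)^*
  + T7 (a x) (a x)^* (a2 x) (a2 x)^* (b x) (b x)^* (b2 x) (b2 x)^*)); last first.
  move=> x xu; rewrite (@ev_step_n s f n x sf xu) (@ev_step_n s g n x sg xu).
  rewrite !cjD cjM cjM !cjK.
  by apply: gI; exact: W_unit.
do 6 rewrite Sm_add.
rewrite sOI sT6 /T1 /T2 /T3 /T4 /T7 sT2 sT4 (@sI K f g bsI) (@sJ K f g bsJ) (@sK K f g bsKf bsKg).
rewrite /II /JJ /KK; ring.
Qed.

Lemma recJ : JJ (step s f) (step s g) = 2 * II f g + 2 * JJ f g - KK f g.
Proof.
apply: (mulfI (MM_neq0 K)).
rewrite -(@sJ K (step s f) (step s g)); last exact: bnd szf1 szng1.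
rewrite (@Sm_ext K _ (fun x =>
    T1 (a x) (a x)^* (b x) (b x)^* + T2 (a2 x) (a2 x)^* (b2 x) (b2 x)^*
  + T3 (a x) (a x)^* (b2 x) (b2 x)^* + T4 (a2 x) (a2 x)^* (b x) (b x)^*
  + OJ (a x) (a x)^* (a2 x) (a2 x)^* (b x) (b x)^* (b2 x) (b2 x)^* (w x) (w x)^*
  - T6 (a x) (a x)^* (a2 x) (a2 x)^* (b x) (b x)^* (b2 x) (b2 x)^* (w x) (w x)^*
  - T7 (a x) (a x)^* (a2 x) (a2 x)^* (b x) (b x)^* (b2 x) (b2 x)^*)); last first.
  move=> x xu; rewrite (@ev_step_n s f n x sf xu) (@ev_step_neg s g n x n0 sg xu).
  rewrite cjD cjB cjM cjM !cjK.
  by apply: gJ; exact: W_unit.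
rewrite Sm_sub Sm_sub; do 4 rewrite Sm_add.
rewrite sOJ sT6 /T1 /T2 /T3 /T4 /T7 sT2 sT4 (@sI K f g bsI) (@sJ K f g bsJ) (@sK K f g bsKf bsKg).
rewrite /II /JJ /KK; ring.
Qed.

Lemma recK : KK (step s f) (step s g) = 4 * II f g - 4 * JJ f g + 2 * KK f g.
Proof.
apply: (mulfI (MM_neq0 K)).
rewrite -(@sK K (step s f) (step s g)); [|exact: bnd szf1 sznf1|exact: bnd szg1 szng1].
rewrite (@Sm_ext K _ (fun x =>
    2 * T7 (a x) (a x)^* (a2 x) (a2 x)^* (b x) (b x)^* (b2 x) (b2 x)^*
  + 2 * (T1 (a x) (a x)^* (b x) (b x)^* + T2 (a2 x) (a2 x)^* (b2 x) (b2 x)^*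
       - T3 (a x) (a x)^* (b2 x) (b2 x)^* - T4 (a2 x) (a2 x)^* (b x) (b x)^*)
  - 2 * T6 (a x) (a x)^* (a2 x) (a2 x)^* (b x) (b x)^* (b2 x) (b2 x)^* (w x) (w x)^*)); last first.
  move=> x xu; rewrite (@ev_step_n s f n x sf xu) (@ev_step_neg s f n x n0 sf xu).
  rewrite (@ev_step_n s g n x sg xu) (@ev_step_neg s g n x n0 sg xu).
  rewrite !cjD !cjN cjM cjM cjM cjM !cjK.
  by apply: gK; exact: W_unit.
rewrite Sm_sub Sm_add !Sm_scal sT6 /T7 (@sK K f g bsKf bsKg) Sm_sub Sm_sub Sm_add.
rewrite /T1 /T2 /T3 /T4 sT2 sT4 (@sI K f g bsI) (@sJ K f g bsJ).
rewrite /II /JJ /KK; ring.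
Qed.

End Rec.

End Circ.

Section P2.
Variable R : realType.
Local Notation C := (R[i]).
Lemma size_dagger (p : {poly C}) : p`_0 != 0 -> size (dagger p) = size p.
Proof. by move=> p0; rewrite /dagger size_poly_eq // subnn cconjE conjC_eq0. Qed.

Lemma dagger0 (p : {poly C}) : p != 0 -> (dagger p)`_0 != 0.
Proof.
move=> p0; rewrite /dagger coef_poly lt0n size_poly_eq0 p0 subn0 cconjE conjC_eq0.
by rewrite -lead_coefE lead_coef_eq0.
Qed.

Lemma negz0 (p : {poly C}) : (negz p)`_0 = p`_0.
Proof. by rewrite -!horner_coef0 ev_negz oppr0. Qed.

Lemma size_step s (q : {poly C}) : s != 0 -> q`_0 != 0 ->
  size (step s q) = (size q + size q)%N.
Proof.
move=> s0 q0; have qn0 : q != 0 by apply: contra q0 => /eqP ->; rewrite coef0.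
have sq : (0 < size q)%N by rewrite lt0n size_poly_eq0.
have rn0 : negz (dagger q) != 0 by rewrite -size_poly_eq0 size_negz size_dagger // -lt0n.
rewrite /step addrC size_polyDl; rewrite size_scale // mulrC size_mulXn ?size_negz ?size_dagger //.
lia.
Qed.

Lemma step0 s (q : {poly C}) : (0 < size q)%N -> (step s q)`_0 = q`_0.
Proof. by move=> sq; rewrite /step coefD coefZ coefXnM sq mulr0 addr0. Qed.

Lemma MM_gt K : (K < MM K)%N.
Proof. have := ltn_expl K.+1 (isT : (1 < 2)%N); rewrite /MM; lia. Qed.

Lemma compN (r q : {poly C}) : (- r) \Po q = - (r \Po q).
Proof. by rewrite -[- r]sub0r comp_polyB comp_poly0 sub0r. Qed.

Lemma negzN (p : {poly C}) : negz (- p) = - negz p.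
Proof. exact: compN. Qed.

Lemma negzM (p q : {poly C}) : negz (p * q) = negz p * negz q.
Proof. exact: comp_polyM. Qed.

Lemma negzK (p : {poly C}) : negz (negz p) = p.
Proof.
rewrite /negz -comp_polyA.
have -> : (- 'X : {poly C}) \Po (- 'X) = 'X.
  by rewrite compN comp_polyX opprK.
exact: comp_polyXr.
Qed.

Lemma ip_negz (p q : {poly C}) : ip (negz p) (negz q) = ip p q.
Proof.
set K := (size p + size q)%N.
have hp : (size p <= MM K)%N by have := MM_gt K; rewrite /K; lia.
have hq : (size q <= MM K)%N by have := MM_gt K; rewrite /K; lia.
apply: (mulfI (@MM_neq0 R K)).
rewrite -(@parseval R K (negz p) (negz q)) ?size_negz // -(@parseval R K p q) //.
by rewrite [LHS]Sm_negx; apply: Sm_ext => x _; rewrite !ev_negz opprK.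
Qed.

Lemma ip_opp (p q : {poly C}) : ip (- p) (- q) = ip p q.
Proof. by rewrite /ip !size_polyN; apply: eq_bigr => i _; rewrite !coefN cjN mulrNN. Qed.

Lemma II_C (p q : {poly C}) : II q p = II p q. Proof. by rewrite /II mulrC. Qed.
Lemma JJ_C (p q : {poly C}) : JJ q p = JJ p q.
Proof.
have e : q * negz p = negz (p * negz q) by rewrite negzM negzK mulrC.
by rewrite /JJ e ip_negz.
Qed.
Lemma KK_C (p q : {poly C}) : KK q p = KK p q. Proof. by rewrite /KK addrC. Qed.

Lemma AA_N (p : {poly C}) : AA (- p) = AA p. Proof. exact: ip_opp. Qed.
Lemma II_Nl (p q : {poly C}) : II (- p) q = II p q. Proof. by rewrite /II mulNr ip_opp. Qed.
Lemma JJ_Nl (p q : {poly C}) : JJ (- p) q = JJ p q. Proof. by rewrite /JJ mulNr ip_opp. Qed.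
Lemma KK_Nl (p q : {poly C}) : KK (- p) q = KK p q. Proof. by rewrite /KK negzN mulrNN. Qed.
Lemma II_NN (p : {poly C}) : II (- p) (- p) = II p p. Proof. by rewrite /II mulrNN. Qed.
Lemma JJ_NN (p : {poly C}) : JJ (- p) (- p) = JJ p p. Proof. by rewrite /JJ negzN mulrNN. Qed.
Lemma KK_NN (p : {poly C}) : KK (- p) (- p) = KK p p. Proof. by rewrite /KK negzN mulrNN. Qed.

Lemma AA_h (p : {poly C}) : AA (negz p) = AA p. Proof. exact: ip_negz. Qed.
Lemma II_h (p q : {poly C}) : II (negz p) (negz q) = II p q. Proof. by rewrite /II -negzM ip_negz. Qed.
Lemma JJ_h (p q : {poly C}) : JJ (negz p) (negz q) = JJ p q.
Proof.
have e : negz p * negz (negz q) = negz (p * negz q) by rewrite negzM.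
by rewrite /JJ e ip_negz.
Qed.
Lemma KK_h (p q : {poly C}) : KK (negz p) (negz q) = KK p q.
Proof. by rewrite /KK !negzK ![negz _ * _]mulrC. Qed.

Lemma unitN (x : C) : x * x^* = 1 -> (- x) * (- x)^* = 1.
Proof. by move=> xu; rewrite cjN mulrNN. Qed.

Lemma dag_abs (p : {poly C}) x : x * x^* = 1 ->
  (dagger p).[x] * ((dagger p).[x])^* = p.[x] * (p.[x])^*.
Proof.
move=> xu; rewrite ev_dagger // cjM cjX cjK.
transitivity ((x * x^*) ^+ (size p).-1 * (p.[x] * (p.[x])^*)); first by rewrite exprMn; ring.
by rewrite xu expr1n mul1r.
Qed.

Lemma bigK (p q : {poly C}) : let K := (size p + size q)%N in
  [/\ (size (dagger p * dagger q)%R <= MM K)%N, (size (p * q)%R <= MM K)%N,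
      (size (dagger p * negz (dagger q))%R <= MM K)%N, (size (p * negz q)%R <= MM K)%N &
      (size (dagger p) <= MM K)%N /\ (size p <= MM K)%N].
Proof.
move=> K; have := MM_gt K; have := size_mul_le2 (dagger p) (dagger q).
have := size_mul_le2 p q; have := size_mul_le2 (dagger p) (negz (dagger q)).
have := size_mul_le2 p (negz q); rewrite !size_negz.
have := size_dagger_le p; have := size_dagger_le q; rewrite /K; split; try split; lia.
Qed.

Lemma AA_r (p : {poly C}) : AA (dagger p) = AA p.
Proof.
have [_ _ _ _ [h1 h2]] := bigK p p.
apply: (mulfI (@MM_neq0 R (size p + size p))); rewrite -(sA h1) -(sA h2).
by apply: Sm_ext => x xu; rewrite dag_abs.
Qed.

Lemma II_r (p q : {poly C}) : II (dagger p) (dagger q) = II p q.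
Proof.
have [h1 h2 _ _ _] := bigK p q.
apply: (mulfI (@MM_neq0 R (size p + size q))); rewrite -(sI h1) -(sI h2).
by apply: Sm_ext => x xu; rewrite !dag_abs.
Qed.

Lemma JJ_r (p q : {poly C}) : JJ (dagger p) (dagger q) = JJ p q.
Proof.
have [_ _ h1 h2 _] := bigK p q.
apply: (mulfI (@MM_neq0 R (size p + size q))); rewrite -(sJ h1) -(sJ h2).
by apply: Sm_ext => x xu; rewrite !dag_abs // unitN.
Qed.

Lemma KK_r (p q : {poly C}) : size p = size q -> KK (dagger p) (dagger q) = KK p q.
Proof.
move=> spq; set K := (size p + size q + size p + size q)%N.
have hM := MM_gt K.
have b1 : (size (dagger p * negz (dagger p))%R <= MM K)%N.
  have := size_mul_le2 (dagger p) (negz (dagger p)); rewrite size_negz.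
  have := size_dagger_le p; move: hM; rewrite /K; lia.
have b2 : (size (dagger q * negz (dagger q))%R <= MM K)%N.
  have := size_mul_le2 (dagger q) (negz (dagger q)); rewrite size_negz.
  have := size_dagger_le q; move: hM; rewrite /K; lia.
have b3 : (size (p * negz p)%R <= MM K)%N.
  have := size_mul_le2 p (negz p); rewrite size_negz; move: hM; rewrite /K; lia.
have b4 : (size (q * negz q)%R <= MM K)%N.
  have := size_mul_le2 q (negz q); rewrite size_negz; move: hM; rewrite /K; lia.
apply: (mulfI (@MM_neq0 R K)); rewrite -(sK b1 b2) -(sK b3 b4).
apply: Sm_ext => x xu; have nu := unitN xu.
rewrite !ev_dagger // !cjM !cjX !cjK spq.
set d := (size q).-1.
transitivity ((x * x^*) ^+ d * ((- x) * (- x)^*) ^+ d *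
  (p.[x] * p.[- x] * ((q.[x])^* * (q.[- x])^*) + (p.[x])^* * (p.[- x])^* * (q.[x] * q.[- x]))).
  by rewrite !exprMn; ring.
by rewrite xu nu !expr1n !mul1r.
Qed.

Lemma coefz_sub (f : {poly C}) (k j : nat) :
  coefz f (k%:Z - j%:Z) = if (j <= k)%N then f`_(k - j) else 0.
Proof.
case: leqP => h; first by rewrite subzn.
have -> : (k%:Z - j%:Z = Negz (j - k.+1))%R by rewrite NegzE; lia.
by [].
Qed.

Lemma corr_coef (f g : {poly C}) k :
  corr f g (k%:Z - ((size g).-1)%:Z) = (f * dagger g)`_k.
Proof.
set N := size g.
set G := fun j : nat => if (j <= k)%N then f`_(k - j) * (dagger g)`_j else 0.
have G0 j : (minn k.+1 N <= j)%N -> G j = 0.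
  rewrite /G geq_min => /orP[h|h]; first by rewrite leqNgt h.
  by rewrite /dagger coef_poly ltnNge h /= mulr0; case: ifP.
rewrite coefMr.
rewrite (eq_bigr (fun j : 'I_k.+1 => G j)); last first.
  by move=> j _; rewrite /G -ltnS ltn_ord.
rewrite (@sum_trunc _ G (minn k.+1 N) k.+1 N) // ?geq_minl ?geq_minr //.
rewrite /corr (reindex_inj rev_ord_inj) /=; apply: eq_bigr => j _.
have jN : (j < N)%N := ltn_ord j.
have e : ((k%:Z - (N.-1)%:Z) + (N - j.+1)%N%:Z = k%:Z - j%:Z)%R.
  have : (N - j.+1 = N.-1 - j)%N by lia.
  move=> ->; rewrite -subzn; last by lia.
  by rewrite predn_int ?(leq_ltn_trans _ jN) //; lia.
rewrite e coefz_sub /G /dagger coef_poly jN.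
have -> : (N - j.+1 = N.-1 - j)%N by lia.
by case: leqP; rewrite ?mul0r.
Qed.

Lemma sum_truncR (F : nat -> R) s n1 n2 : (forall i, (s <= i)%N -> F i = 0) ->
  (s <= n1)%N -> (s <= n2)%N -> \sum_(i < n1) F i = \sum_(i < n2) F i.
Proof.
move=> F0.
suff h n : (s <= n)%N -> \sum_(i < n) F i = \sum_(i < s) F i.
  by move=> h1 h2; rewrite h // h.
move=> sn; rewrite (big_ord_widen n F sn) [RHS]big_mkcond; apply: eq_bigr => i _.
by case: ltnP => // si; rewrite F0.
Qed.

Local Notation toC r := (real_complex R r).

Lemma sqmodC (x : C) : toC (sqmod x) = x * x^*.
Proof. by rewrite /sqmod add_Re2_Im2 normCK. Qed.

Lemma toC_sum n (F : nat -> R) : toC (\sum_(i < n) F i) = \sum_(i < n) toC (F i).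
Proof. exact: raddf_sum. Qed.

Lemma ip_self (p : {poly C}) : ip p p = toC (\sum_(i < size p + size p) sqmod p`_i).
Proof.
rewrite (toC_sum (size p + size p) (fun i => sqmod p`_i)).
by apply: eq_bigr => i _; rewrite sqmodC.
Qed.

Lemma Re_toC (r : R) : complex.Re (toC r) = r. Proof. by []. Qed.

Lemma ip_fDg (f g : {poly C}) : ip (f * dagger g) (f * dagger g) = II f g.
Proof.
set K := (size f + size g)%N.
have hM := MM_gt K.
have b1 : (size (f * dagger g)%R <= MM K)%N.
  have := size_mul_le2 f (dagger g); have := size_dagger_le g; move: hM; rewrite /K; lia.
have b2 : (size (f * g)%R <= MM K)%N.
  have := size_mul_le2 f g; move: hM; rewrite /K; lia.
apply: (mulfI (@MM_neq0 R K)); rewrite -(parseval b1 b1) -(sI b2).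
apply: Sm_ext => x xu; rewrite hornerM cjM.
transitivity (f.[x] * (f.[x])^* * ((dagger g).[x] * ((dagger g).[x])^*)); first by ring.
by rewrite dag_abs.
Qed.

Lemma num_eq (f g : {poly C}) : size f = size g ->
  \sum_(0 <= k < ((maxn (size f) (size g)).*2).-1)
     sqmod (corr f g (k%:Z - ((maxn (size f) (size g)).-1)%:Z)) = complex.Re (II f g).
Proof.
move=> sfg; rewrite sfg maxnn.
under eq_bigr => k _ do rewrite corr_coef.
rewrite -ip_fDg ip_self Re_toC big_mkord.
apply: (@sum_truncR (fun i => sqmod (f * dagger g)`_i) (size (f * dagger g))).
- by move=> i hi; rewrite nth_default // /sqmod /= expr0n /= addr0.
- have := size_polyMleq f (dagger g); have := size_dagger_le g; rewrite sfg -addnn; lia.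
- exact: leq_addr.
Qed.

Lemma sqmod0 (x : C) : 0 <= sqmod x.
Proof. by rewrite /sqmod addr_ge0 // sqr_ge0. Qed.

Lemma den_eq (f : {poly C}) : modc (corr f f 0) = complex.Re (AA f).
Proof.
have -> : corr f f 0 = AA f.
  by rewrite /corr /AA -(@ipW R f f (size f)).

rewrite /AA ip_self /modc /sqmod Re_toC /= expr0n /= addr0 sqrtr_sqr ger0_norm //.
by apply: sumr_ge0 => i _; exact: sqmod0.
Qed.

Lemma CDF_E (f g : {poly C}) : size f = size g ->
  CDF f g = complex.Re (II f g) / (complex.Re (AA f) * complex.Re (AA g)).
Proof. by move=> sfg; rewrite /CDF num_eq // !den_eq. Qed.

Lemma ReD (x y : C) : complex.Re (x + y) = complex.Re x + complex.Re y.
Proof. by case: x; case: y. Qed.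
Lemma ReB (x y : C) : complex.Re (x - y) = complex.Re x - complex.Re y.
Proof. by case: x; case: y. Qed.
Lemma natC k : (k%:R : C) = toC (k%:R). Proof. exact: (esym (rmorph_nat _ k)). Qed.
Lemma Re_natM k (x : C) : complex.Re (k%:R * x) = k%:R * complex.Re x.
Proof. by rewrite natC; case: x => a b /=; rewrite mul0r subr0. Qed.

Definition good (f g : {poly C}) :=
  [/\ size f = size g, (0 < size f)%N, f`_0 != 0 & g`_0 != 0].

Lemma sig_props (x : C) : x = 1 \/ x = -1 -> [/\ x != 0, x * x^* = 1 & x ^+ 2 = 1].
Proof.
have cj1 : (1 : C)^* = 1 by exact: rmorph1.
case=> ->; first by split; [exact: oner_neq0 | rewrite cj1 mulr1 | exact: expr1n].
split; first by rewrite oppr_eq0 oner_eq0.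
  by rewrite cjN cj1 mulrNN mulr1.
by rewrite sqrrN expr1n.
Qed.

Section Seq.
Variable sigma : nat -> C.
Hypothesis hs : forall m, sigma m = 1 \/ sigma m = -1.

Lemma good_step (f g : {poly C}) m : good f g -> good (step (sigma m) f) (step (sigma m) g).
Proof.
case=> sfg s0 f0 g0; have [sn0 _ _] := sig_props (hs m).
split.
- by rewrite !size_step // sfg.
- by rewrite size_step //; lia.
- by rewrite step0.
- by rewrite step0 // -sfg.
Qed.

Lemma good_seq (f g : {poly C}) m : good f g -> good (qseq sigma f m) (qseq sigma g m).
Proof. by move=> h; elim: m => [|m IH] //=; exact: good_step. Qed.

Definition qh : R := - 2^-1.
Definition c0 (I J K : R) := (I + J) / 2 + (I - J + K) / 6.
Definition c1 (I J K : R) := (2 * (I - J) - K) / 6.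
Definition e0 (I J K : R) := (I + J) / 2 - (I - J + K) / 6.
Definition k0 (I J K : R) := 2 * ((I - J + K) / 3).
Definition k1 (I J K : R) := (2 * (I - J) - K) / 3.

Variables (f g : {poly C}).
Hypothesis hfg : good f g.
Local Notation fm m := (qseq sigma f m).
Local Notation gm m := (qseq sigma g m).
Local Notation RI := (complex.Re (II f g)).
Local Notation RJ := (complex.Re (JJ f g)).
Local Notation RK := (complex.Re (KK f g)).

Lemma closed_form m :
  [/\ complex.Re (AA (fm m)) = 2 ^+ m * complex.Re (AA f),
      complex.Re (AA (gm m)) = 2 ^+ m * complex.Re (AA g),
      complex.Re (II (fm m) (gm m)) = 4 ^+ m * (c0 RI RJ RK + c1 RI RJ RK * qh ^+ m),
      complex.Re (JJ (fm m) (gm m)) = 4 ^+ m * (e0 RI RJ RK - c1 RI RJ RK * qh ^+ m) &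
      complex.Re (KK (fm m) (gm m)) = 4 ^+ m * (k0 RI RJ RK - k1 RI RJ RK * qh ^+ m)].
Proof.
elim: m => [|m [hA hB hI hJ hK]].
  by rewrite /= !expr0 !mul1r !mulr1 /c0 /c1 /e0 /k0 /k1; split => //; field.
have [sfg n0 _ _] := good_seq m hfg.
have [_ su s2] := sig_props (hs m).
have sf : size (fm m) = size (fm m) by [].
rewrite /=; split.
- by rewrite (recA sf (esym sfg) n0 su) Re_natM hA exprS mulrA.
- have n0g : (0 < size (gm m))%N by rewrite -sfg.
  by rewrite (@recA R _ (gm m) (gm m) _ (erefl _) (erefl _) n0g su) Re_natM hB exprS mulrA.
- rewrite (recI sf (esym sfg) n0 su s2) ReD ReD !Re_natM hI hJ hK !exprS; move: (4 ^+ m) (qh ^+ m) => P Q; rewrite /qh /c0 /c1 /e0 /k0 /k1.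
  by field.
- rewrite (recJ sf (esym sfg) n0 su s2) ReB ReD !Re_natM hI hJ hK !exprS; move: (4 ^+ m) (qh ^+ m) => P Q; rewrite /qh /c0 /c1 /e0 /k0 /k1.
  by field.
- rewrite (recK sf (esym sfg) n0 su s2) ReD ReB !Re_natM hI hJ hK !exprS; move: (4 ^+ m) (qh ^+ m) => P Q; rewrite /qh /c0 /c1 /e0 /k0 /k1.
  by field.
Qed.

End Seq.
End P2.

Local Open Scope classical_set_scope.
Local Open Scope ring_scope.
Section P3.
Variable R : realType.
Local Notation C := (R[i]).
Definition Fcdf (A B I J K : R) (m : nat) : R := (c0 I J K + c1 I J K * qh R ^+ m) / (A * B).

Definition Fc (f g : {poly C}) (m : nat) : R :=
  Fcdf (complex.Re (AA f)) (complex.Re (AA g)) (complex.Re (II f g))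
       (complex.Re (JJ f g)) (complex.Re (KK f g)) m.

Lemma cdf_seq (sigma : nat -> C) (hs : forall m, sigma m = 1 \/ sigma m = -1)
  (f g : {poly C}) (hfg : good f g) m :
  CDF (qseq sigma f m) (qseq sigma g m) = Fc f g m.
Proof.
have [sfg _ _ _] := good_seq hs m hfg.
have [hA hB hI _ _] := closed_form hs hfg m.
rewrite CDF_E // hA hB hI /Fc /Fcdf.
have e : (2 : R) ^+ m * 2 ^+ m = 4 ^+ m by rewrite -exprMn -natrM.
by rewrite mulrACA e invfM mulrACA divff ?mul1r // expf_neq0 // pnatr_eq0.
Qed.

Lemma good_ff (f g : {poly C}) : good f g -> good f f.
Proof. by case=> ? ? ? ?; split. Qed.
Lemma good_gg (f g : {poly C}) : good f g -> good g g.
Proof. by case=> sfg ? ? ?; split => //; rewrite -sfg. Qed.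

Lemma psc_seq (sigma : nat -> C) (hs : forall m, sigma m = 1 \/ sigma m = -1)
  (f g : {poly C}) (hfg : good f g) m :
  PSC (qseq sigma f m) (qseq sigma g m) =
  Num.sqrt ((Fc f f m - 1) * (Fc g g m - 1)) + Fc f g m.
Proof.
by rewrite /PSC /ADF !cdf_seq //; [exact: good_gg hfg | exact: good_ff hfg].
Qed.

Lemma Fcdf_cvg A B I J K :
  (fun m => Fcdf A B I J K m) @ \oo --> (c0 I J K / (A * B)).
Proof.
have hq : `|qh R| < 1.
  rewrite /qh normrN ger0_norm ?invr_ge0 ?ler0n //; lra.
have h := cvgD (cvg_cst (c0 I J K / (A * B))) (cvgM (cvg_cst (c1 I J K / (A * B))) (cvg_expr hq)).
rewrite mulr0 addr0 in h.
have -> : (fun m => Fcdf A B I J K m) =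
          (fun m => c0 I J K / (A * B) + c1 I J K / (A * B) * qh R ^+ m).
  by apply: funext => m; rewrite /Fcdf mulrDl mulrAC.
exact: h.
Qed.

Lemma gen_ok x (f g : {poly C}) : good f g -> let p := act_gen x (f, g) in
  [/\ good p.1 p.2, forall m, Fc p.1 p.2 m = Fc f g m &
      forall m, (Fc p.1 p.1 m - 1) * (Fc p.2 p.2 m - 1) = (Fc f f m - 1) * (Fc g g m - 1)].
Proof.
move=> hfg; have [sfg s0 f0 g0] := hfg.
have fn0 : f != 0 by apply: contra f0 => /eqP ->; rewrite coef0.
have gn0 : g != 0 by apply: contra g0 => /eqP ->; rewrite coef0.
case: x => /=.
- split; first by split => //; rewrite -sfg.
  + by move=> m; rewrite /Fc II_C JJ_C KK_C /Fcdf [complex.Re (AA g) * _]mulrC.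
  + by move=> m; rewrite mulrC.
- split; first by split; rewrite ?size_polyN ?coefN ?oppr_eq0.
  + by move=> m; rewrite /Fc AA_N II_Nl JJ_Nl KK_Nl.
  + by move=> m; rewrite /Fc AA_N II_NN JJ_NN KK_NN.
- split; first by split; rewrite ?size_negz ?negz0.
  + by move=> m; rewrite /Fc !AA_h II_h JJ_h KK_h.
  + by move=> m; rewrite /Fc !AA_h !II_h !JJ_h !KK_h.
- split; first by split; rewrite ?size_dagger ?dagger0.
  + by move=> m; rewrite /Fc !AA_r II_r JJ_r KK_r.
  + by move=> m; rewrite /Fc !AA_r !II_r !JJ_r !KK_r.
Qed.

Lemma word_ok t (f g : {poly C}) : good f g ->
  [/\ good (act_word t (f, g)).1 (act_word t (f, g)).2,
      forall m, Fc (act_word t (f, g)).1 (act_word t (f, g)).2 m = Fc f g m &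
      forall m, (Fc (act_word t (f, g)).1 (act_word t (f, g)).1 m - 1) *
                (Fc (act_word t (f, g)).2 (act_word t (f, g)).2 m - 1)
                = (Fc f f m - 1) * (Fc g g m - 1)].
Proof.
move=> hfg; elim: t => [|x t IH]; first by split.
have -> : act_word (x :: t) (f, g) = act_gen x (act_word t (f, g)) by [].
move: IH; case: (act_word t (f, g)) => a b [ga ea pa].
have ga' : good a b := ga.
have ea' : forall m, Fc a b m = Fc f g m := ea.
have pa' : forall m, (Fc a a m - 1) * (Fc b b m - 1) = (Fc f f m - 1) * (Fc g g m - 1) := pa.
have [g' e' p'] := gen_ok x ga'.
split => // m; first by rewrite e' ea'.
by rewrite p' pa'.
Qed.

Lemma psc_cvg (u v w : nat -> R) lu lv lw :
  u @ \oo --> lu -> v @ \oo --> lv -> w @ \oo --> lw ->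
  (fun m => Num.sqrt ((u m - 1) * (v m - 1)) + w m) @ \oo -->
  (Num.sqrt ((lu - 1) * (lv - 1)) + lw).
Proof.
move=> hu hv hw.
have h1 : (fun m => (u m - 1) * (v m - 1)) @ \oo --> ((lu - 1) * (lv - 1)).
  by apply: cvgM; apply: cvgB => //; exact: cvg_cst.
have h2 : (fun m => Num.sqrt ((u m - 1) * (v m - 1))) @ \oo --> Num.sqrt ((lu - 1) * (lv - 1)).
  exact: (continuous_cvg _ (@sqrt_continuous R _) h1).
by apply: cvgD.
Qed.

End P3.

Theorem corollary3p5 (R : realType) (l : nat) (f0 g0 : {poly R[i]})
  (hf : size f0 = l) (hf0 : f0`_0 != 0)
  (hg : size g0 = l) (hg0 : g0`_0 != 0)
  (t : seq gen) (a0 b0 : {poly R[i]})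
  (hab : act_word t (f0, g0) = (a0, b0))
  (sigma : nat -> R[i]) (hsigma : forall m, sigma m = 1 \/ sigma m = -1) :
  (exists L : R,
     (fun m => CDF (qseq sigma a0 m) (qseq sigma b0 m)) @ \oo --> L /\
     (fun m => CDF (qseq sigma f0 m) (qseq sigma g0 m)) @ \oo --> L) /\
  (exists L : R,
     (fun m => PSC (qseq sigma a0 m) (qseq sigma b0 m)) @ \oo --> L /\
     (fun m => PSC (qseq sigma f0 m) (qseq sigma g0 m)) @ \oo --> L).
Proof.
have hgood : good f0 g0.
  split => //; first by rewrite hf hg.
  rewrite lt0n size_poly_eq0; by apply: contra hf0 => /eqP ->; rewrite coef0.
have [gab0 eC0 eP0] := word_ok t hgood; rewrite hab in gab0 eC0 eP0.
have gab : good a0 b0 := gab0.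
have eC : forall m, Fc a0 b0 m = Fc f0 g0 m := eC0.
have eP : forall m, (Fc a0 a0 m - 1) * (Fc b0 b0 m - 1) = (Fc f0 f0 m - 1) * (Fc g0 g0 m - 1) := eP0.
split.
- eexists; split; last first.
    by rewrite (funext (cdf_seq hsigma hgood)); exact: Fcdf_cvg.
  by rewrite (funext (cdf_seq hsigma gab)) (funext eC); exact: Fcdf_cvg.
- eexists; split; last first.
    rewrite (funext (psc_seq hsigma hgood)); by apply: psc_cvg; exact: Fcdf_cvg.
  rewrite (funext (psc_seq hsigma gab)).
  have -> : (fun m => Num.sqrt ((Fc a0 a0 m - 1) * (Fc b0 b0 m - 1)) + Fc a0 b0 m) =
            (fun m => Num.sqrt ((Fc f0 f0 m - 1) * (Fc g0 g0 m - 1)) + Fc f0 g0 m).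
    by apply: funext => m; rewrite eP eC.
  by apply: psc_cvg; exact: Fcdf_cvg.
Qed.
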